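(* Let $p$ be a prime with $p\equiv 1\pmod 8$ and $p\equiv 2\pmod 3$. Then there exist infinitely many septuples $(A,B,C,D,E,F,G)\in\mathbb{Z}^7$ of the following parametrized form: there are nonzero odd integers $\lambda,\gamma$ with $\gcd(\lambda,3\gamma)=\gcd(p,3\gamma)=\gcd(p,\lambda)=1$, nonzero integers $\epsilon_0,\delta_0$ with $p\lambda^2\epsilon_0+9\gamma^2\delta_0=1$, and integers $\mu,t_0,F_0$ such that $A=\frac{p\lambda^2-9\gamma^2}{2}$, $B=2pF_0^2\left(\delta_0-\epsilon_0-\mu(p\lambda^2+9\gamma^2)\right)+(p\lambda^2+9\gamma^2)t_0F_0$, $C=2pF_0^2\left(\delta_0+\epsilon_0-\mu(p\lambda^2-9\gamma^2)\right)+(p\lambda^2-9\gamma^2)t_0F_0$, $D=\frac{p\lambda^2+9\gamma^2}{2}$, $E=F_0\left(2pF_0(\epsilon_0+9\mu\gamma^2)-9\gamma^2t_0\right)\left(2F_0(\delta_0-p\mu\lambda^2)+\lambda^2t_0\right)$, $F=2F_0$, $G=3\lambda\gamma$; and such that each of these septuples satisfies the following conditions: (A1) $B^2-C^2+2pEF=0$, $2AB-2CD+pF^2=0$, $A^2-D^2+pG^2=0$; (A3) $\gcd(A,D,G)=1$, $E\not\equiv 0\pmod p$, $G\not\equiv 0\pmod p$; (A4) for every odd prime $l$ with $l\ne3$, $l\ne p$ and $l\mid\gcd(AC-BD,\ DE-CF,\ AE-BF)$, $p$ is a square in $\mathbb{Q}_l^\times$; (A5) there is an integer $H$ with $G-EH^6\equiv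 0\pmod p$ such that $A+\zeta BH^4$ is a quadratic non-residue in $\mathbb{F}_p^\times$ for every cube root of unity $\zeta\in\mathbb{F}_p^\times$; (A7) $A+B\not\equiv 0\pmod 3$ and $G\equiv 0\pmod 3$; and, for every integer $n\ge 1$, (A6) $v_3(E)-v_3(G)<6n$.
   Context: $v_3$ denotes the $3$-adic valuation. *)

(* Defs.v *)
From HB Require Import structures.
From mathcomp Require Import all_boot all_order all_algebra.
From mathcomp Require Import boolp classical_sets cardinality.
Set Implicit Arguments. Unset Strict Implicit. Unset Printing Implicit Defensive.
Import Order.TTheory GRing.Theory Num.Theory.
Local Open Scope ring_scope.

Definition septuple := (int * int * int * int * int * int * int)%type.

Definition v3 (x : int) : nat := logn 3 `|x|%N.

(* [a] is a square in Q_l^x, for [a] an l-adic unit (l prime, l not dividing a):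
   by compactness of Z_l this is the statement that a is a square modulo
   every power l^k (a square in Q_l of an l-adic unit lies in Z_l^x). *)
Definition padic_square (l : nat) (a : int) : Prop :=
  forall k : nat, exists x : int, (x ^+ 2 == a %[mod (l ^ k)%:Z])%Z.

Definition param_form (p : nat) (s : septuple) : Prop :=
  let '(A, B, C, D, E, F, G) := s in
  let pz := p%:Z in
  exists (lam gam eps0 del0 mu t0 F0 : int),
    [/\ lam != 0, gam != 0, ~~ (2 %| lam)%Z, ~~ (2 %| gam)%Z &
    [/\ gcdz lam (3 * gam) = 1, gcdz pz (3 * gam) = 1, gcdz pz lam = 1,
        eps0 != 0 /\ del0 != 0 &
    [/\ pz * lam ^+ 2 * eps0 + 9 * gam ^+ 2 * del0 = 1,
        2 * A = pz * lam ^+ 2 - 9 * gam ^+ 2,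
        B = 2 * pz * F0 ^+ 2 * (del0 - eps0 - mu * (pz * lam ^+ 2 + 9 * gam ^+ 2))
            + (pz * lam ^+ 2 + 9 * gam ^+ 2) * t0 * F0,
        C = 2 * pz * F0 ^+ 2 * (del0 + eps0 - mu * (pz * lam ^+ 2 - 9 * gam ^+ 2))
            + (pz * lam ^+ 2 - 9 * gam ^+ 2) * t0 * F0 &
    [/\ 2 * D = pz * lam ^+ 2 + 9 * gam ^+ 2,
        E = F0 * (2 * pz * F0 * (eps0 + 9 * mu * gam ^+ 2) - 9 * gam ^+ 2 * t0)
               * (2 * F0 * (del0 - pz * mu * lam ^+ 2) + lam ^+ 2 * t0),
        F = 2 * F0 &
        G = 3 * lam * gam]]]].

Definition good_septuple (p : nat) (s : septuple) : Prop :=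
  let '(A, B, C, D, E, F, G) := s in
  let pz := p%:Z in
  [/\
      [/\ B ^+ 2 - C ^+ 2 + 2 * pz * E * F = 0,
          2 * A * B - 2 * C * D + pz * F ^+ 2 = 0 &
          A ^+ 2 - D ^+ 2 + pz * G ^+ 2 = 0],
      [/\ gcdz (gcdz A D) G = 1, ~~ (pz %| E)%Z & ~~ (pz %| G)%Z],
      (forall l : nat, prime l -> odd l -> l <> 3%N -> l <> p ->
         (l%:Z %| gcdz (gcdz (A * C - B * D) (D * E - C * F)) (A * E - B * F))%Z ->
         padic_square l pz),
      (exists H : int, (pz %| G - E * H ^+ 6)%Z /\
         forall zeta : 'F_p, zeta ^+ 3 = 1 ->
           let a : 'F_p := A%:~R + zeta * B%:~R * H%:~R ^+ 4 in
           a != 0 /\ ~ (exists x : 'F_p, x ^+ 2 = a)) &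
      (~~ (3 %| A + B)%Z /\ (3 %| G)%Z) /\
      (forall n : nat, (1 <= n)%N -> (v3 E)%:Z - (v3 G)%:Z < (6 * n)%:Z)].

(* Main.v *)
Require Import Defs.
From HB Require Import structures.
From mathcomp Require Import all_boot all_order all_algebra finfield.
From mathcomp Require Import boolp classical_sets cardinality.
From mathcomp Require Import ring lra zify.
Import Order.TTheory GRing.Theory Num.Theory.
Local Open Scope ring_scope.
Lemma Fp_pow_p {p : nat} (hp : prime p) (x : 'F_p) : x ^+ p = x.
Proof. by rewrite -{2}(expf_card x) card_Fp. Qed.

Lemma cube1 {p : nat} (hp : prime p) (hp3 : (p %% 3 = 2)%N) (x : 'F_p) :
  x ^+ 3 = 1 -> x = 1.
Proof.
move=> hx.
have x0 : x != 0.
  apply/eqP => x0; move: hx; rewrite x0 expr0n /= => /eqP.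
  by rewrite eq_sym oner_eq0.
have hxp := Fp_pow_p hp x.
have e : p = ((p %/ 3) * 3 + 2)%N by rewrite {1}(divn_eq p 3) hp3.
have : x ^+ ((p %/ 3) * 3 + 2) = x by rewrite -e.
rewrite exprD mulnC exprM hx expr1n mul1r expr2 => hxx.
by apply: (mulfI x0); rewrite hxx mulr1.
Qed.

Lemma no_sqrt_m3 {p : nat} (hp : prime p) (hp3 : (p %% 3 = 2)%N)
  (h2 : (2 : 'F_p) != 0) (h3 : (3 : 'F_p) != 0) :
  ~ exists y : 'F_p, y ^+ 2 = -3.
Proof.
move=> [y hy].
set w := (y - 1) / 2.
have hw : w ^+ 3 = 1.
  apply/eqP; rewrite -subr_eq0.
  have -> : w ^+ 3 - 1 = (w - 1) * (y ^+ 2 + 3) / 4.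
    rewrite /w; field.
    by rewrite (_ : (4 : 'F_p) = 2 * 2) ?mulf_neq0 //; ring.
  by rewrite hy addNr mulr0 mul0r.
have w1 := @cube1 p hp hp3 w hw.
have hy3 : y = 3.
  have -> : y = 2 * w + 1 by rewrite /w; field.
  by rewrite w1; ring.
have : (3 : 'F_p) * (2 * 2) = 0.
  by rewrite -[RHS](addrN 3) -hy hy3; ring.
by apply/eqP; rewrite !mulf_neq0.
Qed.

Lemma exists_z {p : nat} (hp : prime p) (hp8 : (p %% 8 = 1)%N) (hp3 : (p %% 3 = 2)%N) :
  exists z : 'F_p, z ^+ 4 = -1.
Proof.
set j := (p %/ 8)%N.
have hpj : p = (8 * j + 1)%N by rewrite {1}(divn_eq p 8) hp8 mulnC.
have p1 : (1 < p)%N := prime_gt1 hp.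
have j0 : (0 < j)%N by rewrite /j; lia.
have : [exists x : 'F_p, (x != 0) && (x ^+ (4 * j) != 1)].
  apply: contraT => /existsPn H.
  have : (size (enum (predC1 (0%R : 'F_p))) <= 4 * j)%N.
    apply: max_unity_roots; first by rewrite muln_gt0.
      apply/allP => x; rewrite mem_enum inE => hx.
      by rewrite unity_rootE; have := H x; rewrite hx /= negbK.
    exact: enum_uniq.
  rewrite -cardE cardC1 card_Fp //; lia.
move=> /existsP [x /andP [x0 hx]].
exists (x ^+ j).
have hf : x ^+ (8 * j) = 1.
  apply: (mulIf x0); rewrite mul1r -exprSr.
  by rewrite -addn1 -hpj Fp_pow_p.
have : (x ^+ (4 * j)) ^+ 2 == 1 by rewrite -exprM (_ : (4 * j * 2 = 8 * j)%N) ?hf //; lia.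
rewrite sqrf_eq1 (negbTE hx) /= => /eqP <-.
by rewrite -exprM mulnC.
Qed.
Definition sept (P M k r u : int) : septuple :=
  (3*M-2, (3*r*u)*((P+9)*(u*k) - 2*(3*r*u)), (3*r*u)*((P-9)*(u*k) + 2*(3*r*u)),
   3*M+7, (3*r*u)*(u*k)*(2*(3*r*u) - 9*(u*k)), 2*(3*r*u), 3).

Lemma param_ok (p : nat) (M k r u : int) (hPM : p%:Z = 6*M+5) :
  param_form p (sept p%:Z M k r u).
Proof.
rewrite /param_form /sept /=.
exists 1, 1, (-6*M-7), (4*(M+1)^+2), 0, (u*k - 2*(3*r*u)*(4*(M+1)^+2)), (3*r*u).
split => //.
split.
- by [].
- rewrite hPM gcdzC (_ : 6*M+5 = (2*M+1)*3 + 2); last by ring.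
  by rewrite gcdzMDl.
- by rewrite gcdz1.
- split; first by lia.
  rewrite mulf_neq0 // expf_neq0 //; lia.
by do !split; rewrite ?hPM; ring.
Qed.

Lemma A5_ok (p : nat) (hp : prime p) (hp8 : (p %% 8 = 1)%N) (hp3 : (p %% 3 = 2)%N)
  (M k r u : int) (n : nat) (hPM : p%:Z = 6*M+5) (hr : r = p%:Z + 3*k)
  (hr12 : r = -1 \/ r = 2) (hu : u = 2 ^+ n)
  (hsq : exists rho : 'F_p, rho ^+ 2 = r%:~R) (hw : exists w : 'F_p, w ^+ 2 = 2) :
  let '(A, B, C, D, E, F, G) := sept p%:Z M k r u in
  exists H : int, (p%:Z %| G - E * H ^+ 6)%Z /\
         forall zeta : 'F_p, zeta ^+ 3 = 1 ->
           let a : 'F_p := A%:~R + zeta * B%:~R * H%:~R ^+ 4 in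
           a != 0 /\ ~ (exists x : 'F_p, x ^+ 2 = a).
Proof.
rewrite /sept.
have p17 : (17 <= p)%N by lia.
have hP' : ((p%:Z)%:~R : 'F_p) = 0 by have := pchar_Fp_0 hp.
have h2 : (2 : 'F_p) != 0.
  by rewrite -(dvdn_pcharf (pchar_Fp hp)); apply/negP => /dvdn_leq; lia.
have h3 : (3 : 'F_p) != 0.
  by rewrite -(dvdn_pcharf (pchar_Fp hp)); apply/negP => /dvdn_leq; lia.
set K := (k%:~R : 'F_p).
set U := (u%:~R : 'F_p).
have rK : (r%:~R : 'F_p) = 3 * K.
  have -> : (r%:~R : 'F_p) = (p%:Z)%:~R + 3 * K by rewrite hr /K; ring.
  by rewrite hP' add0r.
have hU : U = 2 ^+ n by rewrite /U hu rmorphXn /=; congr (_ ^+ _); ring.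
have U0 : U != 0 by rewrite hU expf_neq0.
have r0 : (r%:~R : 'F_p) != 0.
  case: hr12 => ->; first by rewrite rmorphN rmorph1 oppr_eq0 oner_eq0.
  by have -> : ((2 : int)%:~R : 'F_p) = 2 by ring.
have K0 : K != 0 by move: r0; rewrite rK mulf_eq0 negb_or => /andP [].
case: hsq => rho hrho; case: hw => w hw.
set v := rho * w ^+ n.
have hv2 : v ^+ 2 = 3 * K * U by rewrite /v exprMn hrho -exprM mulnC exprM hw hU rK.
have v0 : v != 0 by apply/eqP => v0; move: hv2; rewrite v0 expr0n /= => /esym/eqP; rewrite !mulf_eq0 (negbTE h3) (negbTE K0) (negbTE U0).
set H' := v^-1.
have hvH : H' ^+ 2 * (3 * K * U) = 1 by rewrite -hv2 -exprMn mulVf // expr1n.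
set Hz : int := (nat_of_ord H')%:Z.
exists Hz.
have hH : (Hz%:~R : 'F_p) = H'.
  by change ((nat_of_ord H')%:R = H'); rewrite natr_Zp.
split.
  rewrite (dvdz_pcharf (pchar_Fp hp)).
  have -> : ((3 - (3 * r * u) * (u * k) * (2 * (3 * r * u) - 9 * (u * k)) * Hz ^+ 6)%:~R : 'F_p)
      = 3 - (3 * r%:~R * U) * (U * K) * (2 * (3 * r%:~R * U) - 9 * (U * K)) * (Hz%:~R) ^+ 6
      by rewrite /U /K; ring.
  rewrite rK hH.
  have -> : 3 - 3 * (3 * K) * U * (U * K) * (2 * (3 * (3 * K) * U) - 9 * (U * K)) * H' ^+ 6
     = 3 - 3 * (H' ^+ 2 * (3 * K * U)) ^+ 3 by ring.
  by rewrite hvH expr1n mulr1 subrr.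
move=> zeta hz; rewrite (@cube1 p hp hp3 zeta hz) mul1r /=.
set a := _ + _.
have ha : 2 * a = - 27.
  rewrite /a.
  have -> : (((3 * r * u) * ((p%:Z + 9) * (u * k) - 2 * (3 * r * u)))%:~R : 'F_p)
      = (3 * r%:~R * U) * (((p%:Z)%:~R + 9) * (U * K) - 2 * (3 * r%:~R * U)) by rewrite /U /K; ring.
  rewrite rK hP' hH.
  have -> : ((3 * M - 2)%:~R : 'F_p) = ((6 * M + 5)%:~R - 9) / 2 by field.
  rewrite -hPM hP'.
  have -> : 2 * ((0 - 9) / 2 + 3 * (3 * K) * U * ((0 + 9) * (U * K) - 2 * (3 * (3 * K) * U)) * H' ^+ 4)
     = - 9 - 18 * (H' ^+ 2 * (3 * K * U)) ^+ 2 by field.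
  by rewrite hvH expr1n; ring.
split.
  apply/eqP => a0; move: ha; rewrite a0 mulr0 => /eqP; rewrite eq_sym oppr_eq0.
  rewrite (_ : (27 : 'F_p) = 3 * 3 * 3); last by ring.
  by rewrite !mulf_eq0 (negbTE h3).
move=> [x hx].
apply: (no_sqrt_m3 hp hp3 h2 h3).
exists (x * w / 3).
rewrite !exprMn hx hw exprVn.
have -> : a * 2 = - 27 by rewrite mulrC ha.
field; rewrite (_ : (9 : 'F_p) = 3 * 3) ?mulf_neq0 //; ring.
Qed.

Lemma good_ok (p : nat) (hp : prime p) (hp8 : (p %% 8 = 1)%N) (hp3 : (p %% 3 = 2)%N)
  (M k r u : int) (n : nat) (hPM : p%:Z = 6*M+5) (hr : r = p%:Z + 3*k)
  (hr12 : r = -1 \/ r = 2) (hk5 : ~~ (3 ^+ 5 %| k)%Z) (hu : u = 2 ^+ n)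
  (hsq : exists rho : 'F_p, rho ^+ 2 = r%:~R) (hw : exists w : 'F_p, w ^+ 2 = 2) :
  good_septuple p (sept p%:Z M k r u).
Proof.
have hA5 := @A5_ok p hp hp8 hp3 M k r u n hPM hr hr12 hu hsq hw.
have p17 : (17 <= p)%N by lia.
have np3 : ~~ (p%:Z %| 3)%Z by rewrite dvdzE; apply/negP => /dvdn_leq; lia.
rewrite /good_septuple /sept /= in hA5 *.
split.
- by split; rewrite ?hPM; ring.
- split.
  + rewrite -gcdzA (gcdzC (3*M+7)) (_ : 3*M+7 = (M+2)*3+1); last by ring.
    by rewrite gcdzMDl !gcdz1.
  + apply/negP => hE; case: hA5 => H [hH _]; move/negP: np3; apply.
    set E := (_ * _ * _) in hE hH.
    have h : (p%:Z %| (3 - E * H ^+ 6) + E * H ^+ 6)%Z by rewrite rpredD // dvdz_mulr.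
    by rewrite subrK in h.
  + exact: np3.
- move=> l hl lodd l3 lp hdiv; exfalso.
  have : (l%:Z %| 18 * r * u ^+ 2 * (p%:Z) ^+ 2)%Z.
    set X := (_ * _ - _ * _) in hdiv.
    have <- : X = 18 * r * u ^+ 2 * (p%:Z) ^+ 2 by rewrite /X hr hPM; ring.
    exact: dvdz_trans hdiv (dvdz_trans (dvdz_gcdl _ _) (dvdz_gcdl _ _)).
  rewrite dvdzE !abszM hu abszX absz_nat (_ : `|(18 : int)|%N = (2 * 3 * 3)%N) // (_ : `|(2 : int)|%N = 2%N) // => hl2.
  have hr2 : (`|r| %| 2)%N by case: hr12 => ->.
  have l2 : ~~ (l %| 2)%N by rewrite dvdn_prime2 //; apply/eqP => e; move: lodd; rewrite e.
  have l3' : ~~ (l %| 3)%N by rewrite dvdn_prime2 //; apply/eqP.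
  move: hl2; rewrite !Euclid_dvdM // ?Euclid_dvdX //.
  rewrite (negbTE l2) (negbTE l3') /=.
  have -> : (l %| `|r|)%N = false by apply/negbTE; apply: contra l2 => h; apply: dvdn_trans h hr2.
  by rewrite dvdn_prime2 //= orbb => /eqP.
- exact: hA5.
split; first split.
- have -> : 3 * M - 2 + 3 * r * u * ((p%:Z + 9) * (u * k) - 2 * (3 * r * u))
    = (M - 1 + r * u * ((p%:Z + 9) * (u * k) - 2 * (3 * r * u))) * 3 + 1 by ring.
  by apply/negP => /dvdz_mod0P; rewrite modzMDl.
- exact: dvdzz.
move=> m hm.
set E := (_ * _ * _).
have hE : E = 9 * k * (r * u ^+ 3 * (2 * r - 3 * k)) by rewrite /E; ring.
have cY : coprimez (3 ^+ 5) (r * u ^+ 3 * (2 * r - 3 * k)).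
  apply: coprimezXl; rewrite !coprimezMr hu; apply/andP; split; first (apply/andP; split).
  - by case: hr12 => ->.
  - have c2 : coprimez 3 (2 ^+ n) by apply: coprimezXr.
    by rewrite c2.
  - rewrite /coprimez (_ : 2 * r - 3 * k = (- k) * 3 + 2 * r); last by ring.
    by rewrite gcdzMDl; case: hr12 => ->.
have hE7 : ~~ (3 ^+ 7 %| E)%Z.
  by rewrite hE (_ : 3 ^+ 7 = 9 * 3 ^+ 5) // -mulrA dvdz_mul2l // Gauss_dvdzl.
have v3E : (v3 E < 7)%N.
  rewrite /v3 ltnNge; apply/negP => h7; move/negP: hE7; apply.
  rewrite dvdzE; apply: dvdn_trans (pfactor_dvdnn 3 `|E|).
  by rewrite abszX; apply: dvdn_exp2l.
have v33 : v3 3 = 1%N by rewrite /v3 logn_prime.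
rewrite v33; lia.
Qed.

Local Open Scope classical_set_scope.

Theorem lemma9p1 (p : nat) (hp : prime p) (hp8 : (p %% 8 = 1)%N) (hp3 : (p %% 3 = 2)%N) :
  infinite_set [set s : septuple | param_form p s /\ good_septuple p s].
Proof.
set M : int := (p %/ 6)%:Z.
have hPM : p%:Z = 6 * M + 5 by rewrite /M; lia.
have [z hz] := @exists_z p hp hp8 hp3.
set w := z - z ^+ 3.
have hw : w ^+ 2 = 2.
  have -> : w ^+ 2 = z ^+ 2 - 2 * z ^+ 4 + z ^+ 4 * z ^+ 2 by rewrite /w; ring.
  by rewrite hz; ring.
have [k [r [hr hr12 hk5 hsq]]] : exists k r : int, [/\ r = p%:Z + 3 * k,
    r = -1 \/ r = 2, ~~ (3 ^+ 5 %| k)%Z & exists rho : 'F_p, rho ^+ 2 = r%:~R].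
  case: (boolP (3 ^+ 5 %| -2 - 2 * M)%Z) => h.
    exists (-1 - 2 * M), 2; split.
    - by rewrite hPM; ring.
    - by right.
    - apply/negP => h'; have := rpredB h' h.
      by rewrite (_ : -1 - 2 * M - (-2 - 2 * M) = 1); last ring.
    - by exists w; rewrite hw.
  exists (-2 - 2 * M), (-1); split.
  - by rewrite hPM; ring.
  - by left.
  - exact: h.
  - by exists (z ^+ 2); rewrite -exprM hz rmorphN rmorph1.
set g := fun n : nat => sept p%:Z M k r (2 ^+ n).
apply/infiniteP.
have sub : g @` setT `<=` [set s : septuple | param_form p s /\ good_septuple p s].
  move=> s [n _ <-]; split; first exact: param_ok.
  exact: (@good_ok p hp hp8 hp3 M k r (2 ^+ n) n hPM hr hr12 hk5 erefl hsq (ex_intro _ w hw)).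
have inj : {in setT &, injective g}.
  move=> a b _ _ /(congr1 (fun s : septuple => s.1.2)) /= e.
  have r0 : (3 * r) != 0 by case: hr12 => ->.
  have e' : 2 ^+ a = 2 ^+ b :> int.
    by apply: (mulfI r0); apply: (mulfI (_ : (2 : int) != 0)).
  have := congr1 absz e'; rewrite !abszX.
  by move/(expnI (_ : 1 < 2)%N); apply.
have := inj_card_eq inj; rewrite card_eq_le => /andP [_ h].
exact: card_le_trans h (subset_card_le sub).
Qed.
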